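(* Let $n\geq 2$, let $M$ be an $n$-dimensional Riemannian manifold (possibly with boundary) and let $u:M\to\mathbb{R}^{n+1}$ be a proper isometric minimal immersion with $u(\partial M)\subset\Pi:=\{\bar x\in\mathbb{R}^{n+1}:x_{n+1}=0\}$. Let $N$ be a unit normal field along $u$, $e_{n+1}$ the last standard basis vector, $X:\mathbb{R}^{n+1}\to\Pi$ the orthogonal projection, $u_{n+1}$ the last coordinate of $u$, and $$f(\bar x)=|x|^{1-n}\varphi\!\left(\frac{x_{n+1}}{|x|}\right),\qquad \varphi(t)=\int_0^t(1+\tau^2)^{-n/2}d\tau,$$ where $\bar x=(x,x_{n+1})$, $x\in\mathbb{R}^n$. Then at every point $y\in M$ with $X(u(y))\neq 0$, $$\frac{1}{|u|^n}\leq h_n\frac{|\langle e_{n+1},N\rangle|}{|X(u)|^n}+\langle\nabla (f\circ u),\nabla u_{n+1}\rangle,$$ where $h_n=(n-1)\varphi(+\infty)=(n-1)\int_0^{\infty}(1+\tau^2)^{-n/2}d\tau$ and $\nabla$ denotes the gradient on $M$ with respect to the induced metric. *)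

(* Defs.v *)
From HB Require Import structures.
From mathcomp Require Import all_boot all_order all_algebra.
From mathcomp Require Import all_classical all_reals all_analysis.
Set Implicit Arguments. Unset Strict Implicit. Unset Printing Implicit Defensive.
Import Order.TTheory GRing.Theory Num.Theory.
Import numFieldNormedType.Exports.
Local Open Scope classical_set_scope.
Local Open Scope ring_scope.

Section Defs.
Variable R : realType.

(* Euclidean inner product and norm on row vectors (the default norm on
   matrices in mathcomp-analysis is the sup norm, so we define these). *)
Definition dot (m : nat) (p q : 'rV[R]_m) : R := (p *m q^T) 0 0.
Definition eucl (m : nat) (p : 'rV[R]_m) : R := Num.sqrt (dot p p).

Definition ebase (m : nat) (i : 'I_m) : 'rV[R]_m := delta_mx 0 i.

Definition lastc (n : nat) (p : 'rV[R]_n.+1) : R := p 0 ord_max.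
Definition Xproj (n : nat) (p : 'rV[R]_n.+1) : 'rV[R]_n.+1 :=
  \row_j (if j == ord_max then 0 else p 0 j).

Definition phi_int (n : nat) (tau : R) : R := powR (1 + tau ^+ 2) (- (n%:R / 2)).
Definition phi (n : nat) (t : R) : R :=
  if 0 <= t then Rintegral lebesgue_measure `[0, t] (phi_int n)
  else - Rintegral lebesgue_measure `[t, 0] (phi_int n).

Definition h (n : nat) : R := (n%:R - 1) * lim (phi n t @[t --> +oo]).

(* f(x, x_{n+1}) = |x|^{1-n} phi(x_{n+1}/|x|), with |x| = |X(xbar)| *)
Definition f (n : nat) (p : 'rV[R]_n.+1) : R :=
  (eucl (Xproj p) ^+ n.-1)^-1 * phi n (lastc p / eucl (Xproj p)).

(* Local description of the immersed manifold by a chart (parametrization)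
   u : D (open in R^n) -> R^{n+1}, with the induced metric. *)
Definition jac (n : nat) (u : 'rV[R]_n -> 'rV[R]_n.+1) (x : 'rV[R]_n)
  : 'M[R]_(n, n.+1) := \matrix_(i, j) ('D_(ebase i) u x) 0 j.

Definition metric (n : nat) (u : 'rV[R]_n -> 'rV[R]_n.+1) (x : 'rV[R]_n)
  : 'M[R]_n := jac u x *m (jac u x)^T.

Definition dcoord (n : nat) (g : 'rV[R]_n -> R) (x : 'rV[R]_n) : 'rV[R]_n :=
  \row_i 'D_(ebase i) g x.

(* <grad g1, grad g2> w.r.t. the induced metric = g^{ij} d_i g1 d_j g2 *)
Definition grad_inner (n : nat) (u : 'rV[R]_n -> 'rV[R]_n.+1)
  (g1 g2 : 'rV[R]_n -> R) (x : 'rV[R]_n) : R :=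
  (dcoord g1 x *m invmx (metric u x) *m (dcoord g2 x)^T) 0 0.

Definition unit_normal (n : nat) (u : 'rV[R]_n -> 'rV[R]_n.+1)
  (N : 'rV[R]_n -> 'rV[R]_n.+1) (x : 'rV[R]_n) : Prop :=
  dot (N x) (N x) = 1 /\ forall i : 'I_n, dot ('D_(ebase i) u x) (N x) = 0.

Definition mean_curv (n : nat) (u : 'rV[R]_n -> 'rV[R]_n.+1)
  (N : 'rV[R]_n -> 'rV[R]_n.+1) (x : 'rV[R]_n) : R :=
  \sum_(i < n) \sum_(j < n)
     invmx (metric u x) i j * dot ('D_(ebase i) ('D_(ebase j) u) x) (N x).

End Defs.
Arguments dot {R m}. Arguments eucl {R m}. Arguments ebase {R m}.
Arguments lastc {R n}. Arguments Xproj {R n}. Arguments phi_int {R}.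
Arguments phi {R}. Arguments h {R}. Arguments f {R}.
Arguments jac {R n}. Arguments metric {R n}. Arguments dcoord {R n}.
Arguments grad_inner {R n}. Arguments unit_normal {R n}. Arguments mean_curv {R n}.

(* Main.v *)
Set Warnings "-notation-overridden,-ambiguous-paths,-notation-incompatible-prefix".
Require Import Defs.
From HB Require Import structures.
From mathcomp Require Import all_boot all_order all_algebra.
From mathcomp Require Import all_classical all_reals all_analysis.
From mathcomp Require Import ring lra.
Set Implicit Arguments. Unset Strict Implicit. Unset Printing Implicit Defensive.
Import Order.TTheory GRing.Theory Num.Theory.
Import numFieldNormedType.Exports.
Local Open Scope classical_set_scope.
Local Open Scope ring_scope.
Section Gen.
Variable R : realType.

Lemma der_comp (f g : R -> R) (x df dg : R) :
  is_derive x 1 f df -> is_derive (f x) 1 g dg -> is_derive x 1 (g \o f) (dg * df).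
Proof.
move=> [fd fv] [gd gv]; split.
  apply/derivable1_diffP; apply: differentiable_comp; exact/derivable1_diffP.
by rewrite -derive1E derive1_comp // !derive1E fv gv.
Qed.

Lemma der_cont (f : R -> R) (x df : R) : is_derive x 1 f df -> {for x, continuous f}.
Proof. by move=> [fd _]; apply/differentiable_continuous/derivable1_diffP. Qed.

Lemma ndecr_of_der (f df : R -> R) (a b : R) :
  (forall t : R, a <= t <= b -> is_derive t 1 f (df t)) -> (forall t, a <= t <= b -> 0 <= df t) ->
  a <= b -> f a <= f b.
Proof.
move=> fd dfp ab.
apply: (@ger0_derive1_ndecr _ f a b) => //.
- move=> x; rewrite in_itv /= => /andP[ax xb].
  by case: (fd x); rewrite ?ltW.
- move=> x; rewrite in_itv /= => /andP[ax xb].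
  have ax' : a <= x <= b by rewrite !ltW.
  rewrite derive1E (derive_val (is_derive := fd x ax')); exact: dfp.
- apply: continuous_in_subspaceT => x; rewrite inE /= in_itv /= => xab.
  exact: der_cont (fd x xab).
Qed.

Lemma cst_of_der0 (f : R -> R) (a b : R) :
  (forall t : R, is_derive t 1 f 0) -> f a = f b.
Proof.
move=> fd.
have H x y : x <= y -> f x = f y.
  move=> xy; apply/eqP; rewrite eq_le; apply/andP; split.
    by apply: (@ndecr_of_der f (fun=> 0)) => // t _.
  rewrite -lerN2; apply: (@ndecr_of_der (fun x => - f x) (fun=> 0)) => // t _.
  by apply: is_derive_eq; rewrite oppr0.
by case: (lerP a b) => ab; [exact: H|apply/esym/H/ltW].
Qed.

Lemma scR (a b : R) : a *: b = a * b.
Proof. by []. Qed.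

Lemma der_inv (f : R -> R) (x df : R) : is_derive x 1 f df -> f x != 0 ->
  is_derive x 1 (fun y => (f y)^-1) (- (f x) ^- 2 * df).
Proof.
move=> [fd fv] fx0; split; first exact: derivableV.
by rewrite deriveV // fv.
Qed.

Lemma der_exp (f : R -> R) (x df : R) k : is_derive x 1 f df ->
  is_derive x 1 (fun y => (f y) ^+ k) (k%:R * f x ^+ k.-1 * df).
Proof.
move=> h; have := is_deriveX k h.
by rewrite -exprfctE.
Qed.
End Gen.
Section Phi.
Variable R : realType.
Variable n : nat.
Hypothesis hn : (2 <= n)%N.

Let S (t : R) := Num.sqrt (1 + t ^+ 2).
Definition psi (t : R) : R := (Num.sqrt (1 + t ^+ 2) ^+ n)^-1.

Lemma q_gt0 (t : R) : 0 < 1 + t ^+ 2.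
Proof. by rewrite ltr_pwDl // sqr_ge0. Qed.

Lemma S_gt0 (t : R) : 0 < Num.sqrt (1 + t ^+ 2).
Proof. by rewrite sqrtr_gt0 q_gt0. Qed.

Lemma S2 (t : R) : Num.sqrt (1 + t ^+ 2) ^+ 2 = 1 + t ^+ 2.
Proof. by rewrite sqr_sqrtr // ltW // q_gt0. Qed.

Lemma phi_intE : phi_int n = psi.
Proof.
apply/funext => t; rewrite /phi_int /psi powRN.
rewrite mulrC powRrM powR12_sqrt ?ltW ?q_gt0 // powR_mulrn //.
Qed.

Lemma psi_gt0 t : 0 < psi t.
Proof. by rewrite /psi invr_gt0 exprn_gt0 // S_gt0. Qed.

Lemma is_derive_S (t : R) : is_derive t 1 (fun t => Num.sqrt (1 + t ^+ 2)) (t / Num.sqrt (1 + t ^+ 2)).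
Proof.
have h1 : is_derive t 1 (fun t : R => 1 + t ^+ 2) (2 * t).
  apply: is_derive_eq; rewrite /GRing.scale /=; ring.
have h2 := is_derive1_sqrt (q_gt0 t).
have := der_comp h1 h2; rewrite /comp => h3.
apply: is_derive_eq; have Sn := S_gt0 t.
field; by rewrite gt_eqF.
Qed.

Lemma is_derive_psi (t : R) : is_derive t 1 psi (- n%:R * t * psi t / (1 + t ^+ 2)).
Proof.
have h1 := der_exp n (is_derive_S t).
have h2 := der_inv h1 (expf_neq0 _ (lt0r_neq0 (S_gt0 t))).
rewrite /psi; apply: is_derive_eq.
have Sn := S_gt0 t. have S2t := S2 t.
case: n hn => // m _.
move: Sn S2t; set s := Num.sqrt (1 + t ^+ 2) => Sn S2t; rewrite -S2t /=.
rewrite !exprS.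
field; rewrite ?mulf_neq0 ?expf_neq0 ?lt0r_neq0 //.
Qed.

Notation mu := (@lebesgue_measure R).

Lemma psi_cont : continuous psi.
Proof. move=> x; exact: der_cont (is_derive_psi x). Qed.

Lemma int_psi (a b : R) : mu.-integrable `[a, b] (EFin \o psi).
Proof.
apply: continuous_compact_integrable; first exact: segment_compact.
exact: continuous_subspaceT psi_cont.
Qed.

Definition Fi (a x : R) := \int[mu]_(t in `[a, x]) psi t.

Lemma Fi_der (a x : R) : a < x -> is_derive x 1 (Fi a) (psi x).
Proof.
move=> ax.
have xx1 : x < x + 1 by rewrite ltrDl ltr01.
have [d v] := continuous_FTC1_closed (f:=psi) (a:=a) (x:=x) (u:=x + 1) xx1 (int_psi a (x+1)) ax (@psi_cont x).
by apply: DeriveDef; [exact: d | rewrite -derive1E v].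
Qed.

Lemma phi_Fi (a x : R) : a < 0 -> a < x -> phi n x = Fi a x - Fi a 0.
Proof.
move=> a0 ax; rewrite /phi phi_intE /Fi.
case: ifPn => x0.
- have := @Rintegral_itvB R psi (BLeft a) (BRight x) 0 (int_psi a x).
  rewrite !bnd_simp (ltW a0) x0 => /(_ isT isT) ->.
  rewrite Rintegral_itv_obnd_cbnd //.
  apply: integrableS (int_psi 0 x) => //.
  by apply: subset_itvr; rewrite bnd_simp.
- have {}x0 : x < 0 by rewrite ltNge.
  have := @Rintegral_itvB R psi (BLeft a) (BRight 0) x (int_psi a 0).
  rewrite !bnd_simp (ltW ax) (ltW x0) => /(_ isT isT) H.
  rewrite -opprB H Rintegral_itv_obnd_cbnd //.
  apply: integrableS (int_psi x 0) => //.
  by apply: subset_itvr; rewrite bnd_simp.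
Qed.

Lemma is_derive_phi (x : R) : is_derive x 1 (phi n) (psi x).
Proof.
pose a := Num.min x 0 - 1.
have m1 : Num.min x 0 <= x by rewrite ge_min lexx.
have m2 : Num.min x 0 <= 0 by rewrite ge_min lexx orbT.
have ax : a < x by rewrite /a; lra.
have a0 : a < 0 by rewrite /a; lra.
have h1 := Fi_der ax.
have h2 : is_derive x 1 (fun y => Fi a y - Fi a 0) (psi x).
  by apply: is_derive_eq; rewrite subr0.
apply: near_eq_is_derive h2.
near=> y; rewrite (phi_Fi a0) //.
near: y; exact: lt_nbhsr.
Unshelve. all: by end_near. Qed.
Lemma phi0 : phi n (0:R) = 0.
Proof. by rewrite /phi lexx set_itv1 Rintegral_set1. Qed.

Lemma psiN (t : R) : psi (- t) = psi t.
Proof. by rewrite /psi sqrrN. Qed.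

Lemma phiN (t : R) : phi n (- t) = - phi n t.
Proof.
have h (x : R) : is_derive x 1 (fun y => phi n y + phi n (- y)) 0.
  have h1 : is_derive x 1 (fun y : R => - y) (-1) by apply: is_derive_eq.
  have h2 := der_comp h1 (is_derive_phi (- x)).
  have h3 := is_derive_phi x.
  rewrite /comp in h2; apply: is_derive_eq.
  by rewrite psiN; ring.
have := @cst_of_der0 _ _ t 0 h.
rewrite oppr0 phi0 addr0 => /eqP; rewrite addr_eq0 => /eqP ->.
by rewrite opprK.
Qed.

Lemma phi_ndecr (x y : R) : x <= y -> phi n x <= phi n y.
Proof.
move=> xy; apply: (@ndecr_of_der _ _ psi) => // t _.
  exact: is_derive_phi.
exact/ltW/psi_gt0.
Qed.

Lemma S_ge1 (t : R) : 1 <= Num.sqrt (1 + t ^+ 2).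
Proof. by rewrite -{1}sqrtr1; apply: ler_wsqrtr; rewrite lerDl sqr_ge0. Qed.

Lemma psi_le (t : R) : psi t <= (1 + t ^+ 2)^-1.
Proof.
rewrite /psi; have e := S2 t; have g1 := S_ge1 t; have g0 := S_gt0 t.
move: e g1 g0; set s := Num.sqrt _ => e g1 g0; rewrite -e.
rewrite lef_pV2 ?posrE ?exprn_gt0 //.
exact: (ler_weXn2l g1 hn).
Qed.

Lemma phi_le2 (t : R) : phi n t <= 2.
Proof.
case: (lerP 0 t) => t0; last first.
  by rewrite (le_trans (phi_ndecr (ltW t0))) // phi0.
pose k (x : R) := 2 - 2 * (1 + x)^-1 - phi n x.
suff : k 0 <= k t.
  rewrite /k phi0 addr0 invr1 mulr1 subrr sub0r.
  have : 0 <= 2 * (1 + t)^-1 by rewrite mulr_ge0 // invr_ge0; lra.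
  lra.
apply: (@ndecr_of_der R k (fun x => 2 * ((1 + x) ^+ 2)^-1 - psi x) 0 t _ _ t0); last first.
  move=> x /andP[x0 _].
  have := psi_le x.
  have -> : 2 * ((1 + x) ^+ 2)^-1 = (1 + x ^+ 2)^-1 + (1 - x) ^+ 2 / ((1 + x) ^+ 2 * (1 + x ^+ 2)).
    have q := q_gt0 x; have x1 : 0 < 1 + x by lra.
    by field; rewrite !lt0r_neq0.
  have : 0 <= (1 - x) ^+ 2 / ((1 + x) ^+ 2 * (1 + x ^+ 2)).
    by rewrite divr_ge0 ?sqr_ge0 // mulr_ge0 // ?sqr_ge0 // ltW // q_gt0.
  move=> ? ?; lra.
move=> x /andP[x0 _].
have h0 : is_derive x 1 (fun y : R => 1 + y) 1.
  by apply: is_derive_eq; ring.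
have x1 : 1 + x != 0 by rewrite lt0r_neq0 //; lra.
have h1 := der_inv h0 x1.
have h2 := is_derive_phi x.
rewrite /k; apply: is_derive_eq.
rewrite scR.
by field.
Qed.

Definition L : R := sup (range (phi n)).

Lemma phi_sup : has_sup (range (@phi R n)).
Proof.
split; first by exists (phi n 0), 0.
by exists 2 => _ [t _ <-]; exact: phi_le2.
Qed.

Lemma phi_leL (t : R) : phi n t <= L.
Proof. by have /ubP := sup_upper_bound phi_sup; apply; exists t. Qed.

Lemma L_ge0 : 0 <= L.
Proof. by rewrite -phi0 phi_leL. Qed.

Lemma phi_cvg : (phi n t : R) @[t --> +oo] --> L.
Proof.
apply: nondecreasing_cvgr; first by move=> x y; exact: phi_ndecr.
by case: phi_sup.
Qed.

Lemma hE : h n = (n%:R - 1) * L.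
Proof. by rewrite /h (cvg_lim _ phi_cvg). Qed.

Definition Af (t : R) := (n%:R - 1) * phi n t + t * psi t.
Definition gf (t : R) := Af t ^+ 2 + psi t ^+ 2.

Lemma is_derive_A (t : R) : is_derive t 1 Af (n%:R * psi t / (1 + t ^+ 2)).
Proof.
have h1 := is_derive_phi t; have h2 := is_derive_psi t.
rewrite /Af; apply: is_derive_eq.
rewrite !scR; have q := q_gt0 t.
by field; rewrite lt0r_neq0.
Qed.

Lemma is_derive_g (t : R) :
  is_derive t 1 gf (2 * n%:R * (n%:R - 1) * phi n t * psi t / (1 + t ^+ 2)).
Proof.
have h1 := der_exp 2 (is_derive_A t); have h2 := der_exp 2 (is_derive_psi t).
rewrite /gf; apply: is_derive_eq.
rewrite /Af; have q := q_gt0 t.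
by field; rewrite lt0r_neq0.
Qed.

Lemma phi_ge0 (t : R) : 0 <= t -> 0 <= phi n t.
Proof. by move=> t0; rewrite -phi0 phi_ndecr. Qed.

Lemma g_mono (t s : R) : 0 <= t -> t <= s -> gf t <= gf s.
Proof.
move=> t0 ts; apply: (@ndecr_of_der _ _ _ _ _ (fun x _ => is_derive_g x)) => // x /andP[tx _].
have x0 : 0 <= x by apply: le_trans tx.
have hn' : 1 <= n%:R :> R by rewrite ler1n; apply: ltnW.
have p1 := phi_ge0 x0; have p2 := psi_gt0 x; have p3 := q_gt0 x.
apply: divr_ge0; last exact: ltW.
apply: mulr_ge0; last exact: ltW.
apply: mulr_ge0 => //; apply: mulr_ge0; lra.
Qed.

Lemma g_even (t : R) : gf (- t) = gf t.
Proof. rewrite /gf /Af psiN phiN; ring. Qed.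

Lemma h_ge0 : 0 <= h (R:=R) n.
Proof.
rewrite hE mulr_ge0 ?L_ge0 // subr_ge0 ler1n; exact: ltnW.
Qed.

Lemma g_bound_pos (t : R) : 0 <= t -> gf t <= h n ^+ 2.
Proof.
move=> t0; have H0 := h_ge0; set H := h n in H0 *.
have HE : H = (n%:R - 1) * L by rewrite /H hE.
apply/ler_addgt0Pr => e e0.
have m1 : t <= Num.max t 1 by rewrite le_max lexx.
have m2 : 1 <= Num.max t 1 by rewrite le_max lexx orbT.
have k0 : 0 <= (2 * H + 2) / e by rewrite divr_ge0 //; [lra | exact: ltW].
pose s := Num.max t 1 + (2 * H + 2) / e.
have s1 : 1 <= s by rewrite /s; lra.
have ts : t <= s by rewrite /s; lra.
have s0 : 0 < s by lra.
pose d := s^-1.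
have ds : d * s = 1 by rewrite /d mulVf // lt0r_neq0.
have d0 : 0 < d by rewrite /d invr_gt0.
have kse : 2 * H + 2 <= s * e.
  by rewrite -ler_pdivrMr //; rewrite /s; lra.
have q := q_gt0 s.
have ps := psi_gt0 s.
have pl := psi_le s.
have sq : s * (1 + s ^+ 2)^-1 = d - d * (1 + s ^+ 2)^-1.
  by rewrite /d; field; rewrite !lt0r_neq0.
have iq : 0 < (1 + s ^+ 2)^-1 by rewrite invr_gt0.
have iqd : (1 + s ^+ 2)^-1 <= d.
  rewrite /d lef_pV2 ?posrE //. nra.
have b1 : s * psi s <= d.
  have : s * psi s <= s * (1 + s ^+ 2)^-1 by rewrite ler_pM2l.
  have : 0 <= d * (1 + s ^+ 2)^-1 by apply: mulr_ge0; apply: ltW.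
  lra.
have b0 : 0 <= s * psi s by apply: mulr_ge0; apply: ltW.
have f0 := phi_ge0 (ltW s0).
have fL := phi_leL s.
have n1 : 1 <= n%:R :> R by rewrite ler1n; exact: ltnW.
have a1 : (n%:R - 1) * phi n s <= H.
  rewrite HE ler_wpM2l //; lra.
have a0 : 0 <= (n%:R - 1) * phi n s by apply: mulr_ge0 => //; lra.
apply: le_trans (g_mono t0 ts) _.
rewrite /gf /Af.
set a := (n%:R - 1) * phi n s in a0 a1 *.
set b := s * psi s in b0 b1 *.
set c := psi s in ps pl *.
have c1 : c <= d by lra.
have dd : d <= 1 by rewrite /d invf_le1 //.
nra.
Qed.

Lemma g_bound (t : R) : gf t <= h n ^+ 2.
Proof.
case: (lerP 0 t) => t0; first exact: g_bound_pos.
by rewrite -g_even g_bound_pos // oppr_ge0 ltW.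
Qed.
End Phi.

Section Dot.
Variable R : realType.

Lemma dotE m (p q : 'rV[R]_m) : dot p q = \sum_k p 0 k * q 0 k.
Proof. by rewrite /dot mxE; apply: eq_bigr => k _; rewrite mxE. Qed.

Lemma dot_ge0 m (p : 'rV[R]_m) : 0 <= dot p p.
Proof. by rewrite dotE sumr_ge0 // => k _; rewrite -expr2 sqr_ge0. Qed.

Lemma dot_eq0 m (p : 'rV[R]_m) : dot p p = 0 -> p = 0.
Proof.
rewrite dotE => /eqP; rewrite psumr_eq0 => [/allP H|k _]; last by rewrite -expr2 sqr_ge0.
apply/rowP => k; rewrite mxE; have := H k (mem_index_enum k).
by rewrite -expr2 sqrf_eq0 => /eqP.
Qed.

Lemma dot_gt0 m (p : 'rV[R]_m) : p != 0 -> 0 < dot p p.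
Proof.
move=> p0; rewrite lt_neqAle dot_ge0 andbT eq_sym.
by apply: contra p0 => /eqP /dot_eq0 ->.
Qed.

Lemma XprojE n (p : 'rV[R]_n.+1) k : Xproj p 0 k = if k == ord_max then 0 else p 0 k.
Proof. by rewrite mxE. Qed.
End Dot.

Section Chain.
Variable R : realType.
Variable n : nat.
Hypothesis hn : (2 <= n)%N.
Variable c : R -> 'rV[R]_n.+1.
Hypothesis hc : derivable c 0 1.
Hypothesis hX : Xproj (c 0) != 0.

Let d := 'D_1 c 0.

Lemma coord_der k : is_derive (0:R) 1 (fun s => c s 0 k) (d 0 k).
Proof.
have dk := (derivable_mxP c 0 1).1 hc 0 k.
by split => //; rewrite /d (derive_mx hc) mxE.
Qed.

Let Xc (k : 'I_n.+1) (p : 'rV[R]_n.+1) := if k == ord_max then 0 else p 0 k.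

Lemma Xc_der k : is_derive (0:R) 1 (fun s => Xc k (c s) ^+ 2) (2 * Xc k (c 0) * Xc k d).
Proof.
rewrite /Xc; case: eqP => _.
  by apply: is_derive_eq; rewrite !mulr0.
have := der_exp 2 (coord_der k) => h.
by apply: is_derive_eq; rewrite /= expr1.
Qed.

Let Q (s : R) := dot (Xproj (c s)) (Xproj (c s)).
Let DS := \sum_k Xc k (c 0) * d 0 k.

Lemma Q_der : is_derive (0:R) 1 Q (2 * DS).
Proof.
have -> : Q = \sum_(k < n.+1) (fun s => Xc k (c s) ^+ 2).
  rewrite fct_sumE; apply/funext => s; rewrite /Q dotE.
  by apply: eq_bigr => k _; rewrite !XprojE -expr2.
apply: (is_derive_eq (is_derive_sum (fun k => Xc_der k))).
rewrite /DS mulr_sumr; apply: eq_bigr => k _.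
by rewrite /Xc; case: eqP => _; rewrite ?mul0r ?mulr0 // mulrA.
Qed.

Let r0 := Num.sqrt (Q 0).

Lemma Q0_gt0 : 0 < Q 0.
Proof. exact: dot_gt0. Qed.

Lemma r0_gt0 : 0 < r0.
Proof. by rewrite sqrtr_gt0 Q0_gt0. Qed.

Lemma chain_val :
  (fun s => f n (c s))^`()%classic 0 =
  (r0 ^+ n)^-1 * (- Af n (c 0 0 ord_max / r0) * (DS / r0)
                   + psi n (c 0 0 ord_max / r0) * d 0 ord_max).
Proof.
have hR := der_comp Q_der (is_derive1_sqrt Q0_gt0).
have hz := coord_der ord_max.
have r00 : Num.sqrt (Q 0) != 0 by rewrite lt0r_neq0 // r0_gt0.
have hT : is_derive (0:R) 1 (fun s => c s 0 ord_max * ((Num.sqrt \o Q) s)^-1)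
   (c 0 0 ord_max * (- (Num.sqrt (Q 0)) ^- 2 * ((2 * Num.sqrt (Q 0))^-1 * (2 * DS))) +
    d 0 ord_max * (Num.sqrt (Q 0))^-1).
  have := der_inv hR r00 => hV.
  by apply: is_derive_eq; rewrite ?scR; ring.
have hP := der_comp hT (is_derive_phi hn _).
have hRn := der_inv (der_exp n.-1 hR) (expf_neq0 _ r00).
have hF := is_deriveM hRn hP.
have -> : (fun s => f n (c s)) = (fun s => ((Num.sqrt \o Q) s ^+ n.-1)^-1 * (phi n \o (fun s => c s 0 ord_max * ((Num.sqrt \o Q) s)^-1)) s).
  by apply/funext => s.
rewrite derive1E (derive_val (is_derive := hF)) !scR.
rewrite /r0 /Af /=.
move: r00 r0_gt0; rewrite /r0; set r := Num.sqrt (Q 0) => r00 rp.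
have n0 : (0 < n)%N by apply: ltnW.
have rn : r ^+ n = r * r ^+ n.-1 by rewrite -exprS prednK.
have nn : n%:R = n.-1%:R + 1 :> R by rewrite natr1 prednK.
have rn2 : r ^+ n.-1 = r * r ^+ n.-2.
  by rewrite -exprS prednK // -ltnS prednK //.
rewrite rn rn2 nn.
have r2 : r ^+ n.-2 != 0 by rewrite expf_neq0.
by field; rewrite r00 r2.
Qed.

Lemma chain_val' :
  (fun s => f n (c s))^`()%classic 0 =
  (eucl (Xproj (c 0)) ^+ n)^-1 *
    (- Af n (lastc (c 0) / eucl (Xproj (c 0))) * (dot (Xproj (c 0)) ('D_1 c 0) / eucl (Xproj (c 0)))
     + psi n (lastc (c 0) / eucl (Xproj (c 0))) * ('D_1 c 0) 0 ord_max).
Proof.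
have -> : dot (Xproj (c 0)) ('D_1 c 0) = DS.
  by rewrite dotE; apply: eq_bigr => k _; rewrite XprojE.
by rewrite chain_val.
Qed.
End Chain.

Section Curve.
Variable R : realType.
Variables (m : nat) (W : normedModType R).

Lemma D_curve (F : 'rV[R]_m -> W) y v :
  'D_v F y = (fun s : R => F (s *: v + y))^`()%classic 0.
Proof.
rewrite /derive1 /derive scale0r add0r.
by under [in RHS]eq_fun do rewrite addr0.
Qed.

Lemma derivable_curve (F : 'rV[R]_m -> W) y v :
  derivable F y v -> derivable (fun s : R => F (s *: v + y)) 0 1.
Proof.
rewrite /derivable /= scale0r add0r => H.
suff -> : (fun h : R => h^-1 *: (F ((h%:A + 0) *: v + y) - F y)) =
  (fun h : R => h^-1 *: (F (h *: v + y) - F y)) by [].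
by apply/funext => h; rewrite [_%:A]mulr1 addr0.
Qed.
End Curve.

Section Lin.
Variable R : realType.

Lemma dotC m (p q : 'rV[R]_m) : dot p q = dot q p.
Proof. by rewrite !dotE; apply: eq_bigr => k _; rewrite mulrC. Qed.

Lemma dotDl m (p q w : 'rV[R]_m) : dot (p + q) w = dot p w + dot q w.
Proof. by rewrite !dotE -big_split; apply: eq_bigr => k _; rewrite mxE mulrDl. Qed.

Lemma dotZl m a (p w : 'rV[R]_m) : dot (a *: p) w = a * dot p w.
Proof. by rewrite !dotE mulr_sumr; apply: eq_bigr => k _; rewrite mxE mulrA. Qed.

Lemma dotNl m (p w : 'rV[R]_m) : dot (- p) w = - dot p w.
Proof. by rewrite -scaleN1r dotZl mulN1r. Qed.

Lemma dotDr m (p q w : 'rV[R]_m) : dot w (p + q) = dot w p + dot w q.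
Proof. by rewrite dotC dotDl !(dotC w). Qed.
Lemma dotZr m a (p w : 'rV[R]_m) : dot w (a *: p) = a * dot w p.
Proof. by rewrite dotC dotZl (dotC w). Qed.
Lemma dotNr m (p w : 'rV[R]_m) : dot w (- p) = - dot w p.
Proof. by rewrite dotC dotNl (dotC w). Qed.

Lemma dot_e m (w : 'rV[R]_m.+1) : dot (ebase ord_max) w = w 0 ord_max.
Proof.
rewrite dotE (bigD1 ord_max) //= big1 ?addr0.
  by rewrite /ebase mxE !eqxx mul1r.
by move=> k kn; rewrite /ebase mxE (negbTE kn) andbF mul0r.
Qed.

Lemma dot_Xe m (p : 'rV[R]_m.+1) : dot (Xproj p) (ebase ord_max) = 0.
Proof. by rewrite dotC dot_e XprojE eqxx. Qed.

Lemma dotX m (p q : 'rV[R]_m.+1) : dot (Xproj p) q = dot (Xproj p) (Xproj q).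
Proof.
rewrite !dotE; apply: eq_bigr => k _; rewrite !XprojE.
by case: eqP => _; rewrite ?mul0r.
Qed.

Lemma dot_split m (p : 'rV[R]_m.+1) :
  dot p p = dot (Xproj p) (Xproj p) + lastc p ^+ 2.
Proof.
rewrite !dotE !big_ord_recr /= !XprojE eqxx mul0r addr0 /lastc expr2; congr (_ + _).
apply: eq_bigr => k _; rewrite !XprojE.
have -> : (widen_ord (leqnSn m) k == ord_max) = false.
  by rewrite -val_eqE /= ltn_eqF.
by [].
Qed.

Lemma CS m (p q : 'rV[R]_m) : dot p q ^+ 2 <= dot p p * dot q q.
Proof.
have [/dot_eq0 ->|] := eqVneq (dot p p) 0.
  have d0 w : dot (0 : 'rV[R]_m) w = 0 by rewrite -(scale0r (0:'rV[R]_m)) dotZl mul0r.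
  by rewrite !d0 expr0n mul0r.
move=> pp0.
have pp : 0 < dot p p by rewrite lt_neqAle eq_sym pp0 dot_ge0.
have := dot_ge0 (dot p p *: q - dot p q *: p).
rewrite !(dotDl, dotZl, dotNl, dotDr, dotZr, dotNr) [dot q p]dotC => H.
have : 0 <= dot p p * (dot p p * dot q q - dot p q ^+ 2).
  by move: H; congr (_ <= _); ring.
by rewrite pmulr_rge0 // subr_ge0.
Qed.
End Lin.

Section Proj.
Variable R : realType.

Lemma row_free_of_inj m k (A : 'M[R]_(m, k)) :
  (forall x : 'rV[R]_m, x *m A = 0 -> x = 0) -> row_free A.
Proof.
move=> H; rewrite -kermx_eq0; apply/eqP/row_matrixP => i; rewrite row0.
by apply: H; apply/sub_kermxP; exact: row_sub.
Qed.

Lemma dot_mx m (p q : 'rV[R]_m) : dot p q = (p *m q^T) 0 0.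
Proof. by []. Qed.

Lemma proj_eq n (J : 'M[R]_(n, n.+1)) (N : 'rV[R]_n.+1) :
  row_free J -> dot N N = 1 -> J *m N^T = 0 ->
  J^T *m invmx (J *m J^T) *m J = 1%:M - N^T *m N.
Proof.
move=> rfJ NN1 JN.
set G := J *m J^T.
have Gu : G \in unitmx.
  rewrite -row_free_unit; apply: row_free_of_inj => x xG.
  have : dot (x *m J) (x *m J) = 0.
    by rewrite dot_mx trmx_mul mulmxA -(mulmxA x) -/G xG mul0mx mxE.
  move/dot_eq0 => xJ; apply: (row_free_inj rfJ); by rewrite xJ mul0mx.
have NN : N *m N^T = 1%:M.
  by apply/matrixP => i j; rewrite !ord1 -dot_mx NN1 mxE eqxx.
have NJ : N *m J^T = 0 by rewrite -[N]trmxK -trmx_mul JN trmx0.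
set M : 'M[R]_(1 + n, n.+1) := col_mx N J.
have Mu0 : (M : 'M[R]_(n.+1)) \in unitmx.
  rewrite -row_free_unit; apply: row_free_of_inj => x xM.
  pose y : 'rV[R]_(1 + n) := x.
  have xE : row_mx (lsubmx y) (rsubmx y) = x := hsubmxK y.
  have {}xM : row_mx (lsubmx y) (rsubmx y) *m (col_mx N J : 'M[R]_(1 + n, n.+1)) = 0.
    by rewrite xE.
  rewrite mul_row_col in xM.
  have x1 : lsubmx y = 0.
    have := congr1 (mulmx^~ N^T) xM.
    by rewrite mulmxDl -!mulmxA NN JN mulmx0 addr0 mulmx1 mul0mx.
  move: xM; rewrite x1 mul0mx add0r -(mul0mx _ J) => /(row_free_inj rfJ) x2.
  by rewrite -xE x1 x2 ?row_mx0 ?mul0mx.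
have Mu : M^T \in unitmx by rewrite unitmx_tr.
set P := J^T *m invmx G *m J.
set Q := 1%:M - N^T *m N.
have K1 : (P - Q) *m N^T = 0.
  rewrite /P /Q !mulmxBl -!mulmxA JN NN mulmx0 mulmx1 mul1mx.
  by rewrite mulmx0 subrr subr0.
have K2 : (P - Q) *m J^T = 0.
  rewrite /P /Q !mulmxBl -!mulmxA NJ mulmx0 subr0 mul1mx.
  by rewrite -/G (mulVmx Gu) mulmx1 subrr.
have K : (P - Q) *m (M^T : 'M[R]_(n.+1, 1 + n)) = 0.
  by rewrite /M tr_col_mx mul_mx_row K1 K2 row_mx0.
have K' : (P - Q) *m (M^T : 'M[R]_(n.+1)) = 0 := K.
apply/eqP; rewrite -subr_eq0; apply/eqP.
by rewrite -[P - Q](mulmxK Mu) K' mul0mx.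
Qed.
End Proj.

Lemma scalar_ineq (R : realType) (A ps s nu H : R) :
  A ^+ 2 + ps ^+ 2 <= H ^+ 2 -> 0 <= H -> s ^+ 2 + nu ^+ 2 <= 1 ->
  (- A * s + ps * nu) * nu <= H * `|nu|.
Proof.
move=> hA H0 hs.
set w := - A * s + ps * nu.
have w2 : w ^+ 2 <= H ^+ 2.
  have e : (A ^+ 2 + ps ^+ 2) * (s ^+ 2 + nu ^+ 2) - w ^+ 2 = (A * nu + ps * s) ^+ 2.
    by rewrite /w; ring.
  have : 0 <= (A * nu + ps * s) ^+ 2 by apply: sqr_ge0.
  rewrite -e => h1.
  have hA0 : 0 <= A ^+ 2 + ps ^+ 2 by apply: addr_ge0; apply: sqr_ge0.
  nra.
have wH : w <= H by nra.
have wH' : - H <= w by nra.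
case: (lerP 0 nu) => n0.
  by rewrite ger0_norm //; nra.
by rewrite ltr0_norm //; nra.
Qed.

Lemma e_mul (R : realType) n k (A : 'M[R]_(n.+1, k)) j :
  (ebase ord_max *m A) 0 j = A ord_max j.
Proof. by rewrite /ebase -rowE mxE. Qed.

Lemma mx11 (R : realType) (A : 'M[R]_(1,1)) (B : 'M[R]_(1, 1)) : (A *m B) 0 0 = A 0 0 * B 0 0.
Proof. by rewrite mxE big_ord1. Qed.

Unset Implicit Arguments.

Theorem lemma1 (R : realType) (n : nat) (hn : (2 <= n)%N)
  (D : set 'rV[R]_n) (hD : open D)
  (u : 'rV[R]_n -> 'rV[R]_n.+1) (N : 'rV[R]_n -> 'rV[R]_n.+1)
  (hu1 : forall x, D x -> differentiable u x)
  (hu2 : forall (i : 'I_n) x, D x -> differentiable ('D_(ebase i) u) x)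
  (himm : forall x, D x -> row_free (jac u x))
  (hN : forall x, D x -> unit_normal u N x)
  (hmin : forall x, D x -> mean_curv u N x = 0)
  (y : 'rV[R]_n) (hy : D y) (hX : Xproj (u y) != 0) :
  (eucl (u y) ^+ n)^-1 <=
    h n * `|dot (ebase ord_max) (N y)| / eucl (Xproj (u y)) ^+ n
    + grad_inner u (f n \o u) (fun x => lastc (u x)) y.
Proof.
set p := u y.
set J := jac u y.
have rfJ := himm y hy.
have [NN1 NJ0] := hN y hy.
set e : 'rV[R]_n.+1 := ebase ord_max.
set r := eucl (Xproj p).
have r0 : 0 < r by rewrite sqrtr_gt0 dot_gt0.
set t := lastc p / r.
pose gvec := (r ^+ n)^-1 *: ((- Af n t / r) *: Xproj p + psi n t *: e).
have Dfi i : 'D_(ebase i) (f n \o u) y = dot gvec ('D_(ebase i) u y).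
  pose c := fun s : R => u (s *: ebase i + y).
  have hd : derivable u y (ebase i) by apply: diff_derivable; exact: hu1.
  have hc : derivable c 0 1 := derivable_curve hd.
  have c0 : c 0 = p by rewrite /c scale0r add0r.
  have dc : 'D_1 c 0 = 'D_(ebase i) u y by rewrite -derive1E -D_curve.
  have hXc : Xproj (c 0) != 0 by rewrite c0.
  transitivity ((fun s => f n (c s))^`()%classic 0); first by rewrite D_curve.
  rewrite (chain_val' hn hc hXc) c0 dc.
  rewrite /gvec dotZl dotDl !dotZl dot_e -/r -/t.
  ring.
have dc1 : dcoord (f n \o u) y = gvec *m J^T.
  apply/rowP => i; rewrite !mxE Dfi dotE; apply: eq_bigr => k _; rewrite !mxE.
  by [].
have dc2 : dcoord (fun x => lastc (u x)) y = e *m J^T.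
  apply/rowP => i; rewrite mxE e_mul !mxE.
  have hd : derivable u y (ebase i) by apply: diff_derivable; exact: hu1.
  by rewrite (derive_mx hd) mxE.
have JN : J *m (N y)^T = 0.
  apply/matrixP => i j; rewrite ord1 !mxE -[RHS](NJ0 i) dotE.
  by apply: eq_bigr => k _; rewrite !mxE.
have PE := proj_eq rfJ NN1 JN.
have GI : grad_inner u (f n \o u) (fun x => lastc (u x)) y =
    dot gvec e - dot gvec (N y) * dot (N y) e.
  rewrite /grad_inner dc1 dc2 /metric -/J trmx_mul trmxK.
  have -> : gvec *m J^T *m invmx (J *m J^T) *m (J *m e^T) =
      gvec *m (J^T *m invmx (J *m J^T) *m J) *m e^T by rewrite !mulmxA.
  rewrite PE mulmxBr mulmx1 mulmxBl mulmxA -(mulmxA gvec) mxE.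
  have -> : gvec *m ((N y)^T *m N y) *m e^T = (gvec *m (N y)^T) *m (N y *m e^T).
    by rewrite !mulmxA.
  by rewrite [X in _ + X]mxE mx11.
rewrite GI.
set nu := N y 0 ord_max.
have e1 : e 0 ord_max = 1 by rewrite /e /ebase mxE !eqxx.
have dge : dot gvec e = (r ^+ n)^-1 * psi n t.
  rewrite /gvec dotZl dotDl !dotZl dot_Xe /e dot_e -/e e1; ring.
set Sd := dot (Xproj p) (N y).
have dgN : dot gvec (N y) = (r ^+ n)^-1 * ((- Af n t / r) * Sd + psi n t * nu).
  by rewrite /gvec dotZl dotDl !dotZl /e dot_e.
have dNe : dot (N y) e = nu by rewrite dotC /e dot_e.
have deN : dot e (N y) = nu by rewrite /e dot_e.
rewrite dge dgN dNe deN.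
have rr : dot (Xproj p) (Xproj p) = r ^+ 2 by rewrite /r /eucl sqr_sqrtr // dot_ge0.
have ep : eucl p = r * Num.sqrt (1 + t ^+ 2).
  rewrite /eucl dot_split rr.
  have -> : r ^+ 2 + lastc p ^+ 2 = r ^+ 2 * (1 + t ^+ 2).
    rewrite /t; field; exact: lt0r_neq0.
  by rewrite sqrtrM ?sqr_ge0 // sqrtr_sqr ger0_norm // ltW.
have lhs : (eucl p ^+ n)^-1 = (r ^+ n)^-1 * psi n t.
  by rewrite ep exprMn invfM /psi.
rewrite lhs.
have hs : (Sd / r) ^+ 2 + nu ^+ 2 <= 1.
  have cs := CS (Xproj p) (Xproj (N y)).
  have nsp := dot_split (N y); rewrite NN1 in nsp.
  rewrite -dotX -/Sd rr in cs.
  have : Sd ^+ 2 <= r ^+ 2 * (1 - nu ^+ 2).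
    by move: cs; rewrite [dot (Xproj (N y)) _](_ : _ = 1 - nu ^+ 2) // /nu -/(lastc (N y)); lra.
  rewrite expr_div_n => H1.
  have : Sd ^+ 2 / r ^+ 2 <= 1 - nu ^+ 2.
    by rewrite ler_pdivrMr ?exprn_gt0 // mulrC.
  lra.
have key := scalar_ineq (g_bound hn t) (@h_ge0 R n hn) hs.
rewrite /gf in key.
set K := (r ^+ n)^-1.
have K0 : 0 <= K by rewrite /K invr_ge0 exprn_ge0 // ltW.
have := ler_wpM2l K0 key.
have E1 : h n * `|nu| / r ^+ n = K * (h n * `|nu|) by rewrite /K mulrC.
have E2 : K * (- Af n t / r * Sd + psi n t * nu) * nu =
          K * ((- Af n t * (Sd / r) + psi n t * nu) * nu) by ring.
rewrite E1 E2.
lra.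
Qed.
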